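(* Let $P$ be a distribution on $\mathcal X\times\{-1,+1\}$ with $\mathcal X\subseteq\mathbb R^d$, let $R>0$, $\mathscr W=\{\mathbf w\in\mathbb R^d:\|\mathbf w\|\le R\}$, and let $\ell:\mathbb R\to\mathbb R_+$ be a convex differentiable loss, with $\mathbf w_*\in\arg\min_{\mathbf w\in\mathscr W}\mathrm E[\ell(y\mathbf w^\top\mathbf x)]$. Suppose (i) there is $q>0$ with $\Pr(y=1\mid\mathbf x)\ge q$ and $\Pr(y=-1\mid\mathbf x)\ge q$ for every $\mathbf x\in\mathcal X$, and (ii) $\ell'(0)>0$. Then Assumption (I) and Assumption (II) hold with a constant $\theta\ge q[\ell'(0)]^2$.
   Context: Assumption (I): there is $\theta>0$ with $\mathrm E[(\ell'(y\mathbf w_*^\top\mathbf x))^2\mathbf x\mathbf x^\top]\succeq\theta\,\mathrm E[\mathbf x\mathbf x^\top]$. Assumption (II): there is $\theta>0$ with $\mathrm E[(\ell'(y\mathbf w^\top\mathbf x))^2\mathbf x\mathbf x^\top]\succeq\theta\,\mathrm E[\mathbf x\mathbf x^\top]$ for all $\mathbf w\in\mathscr W$. Expectations are over $(\mathbf x,y)\sim P$; $\succeq$ is the Loewner order. *)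

(* Defs.v *)
From HB Require Import structures.
From mathcomp Require Import all_boot all_order all_algebra.
From mathcomp Require Import all_classical all_reals all_analysis.
Set Implicit Arguments. Unset Strict Implicit. Unset Printing Implicit Defensive.
Import Order.TTheory GRing.Theory Num.Theory.
Import numFieldNormedType.Exports.
Local Open Scope classical_set_scope.
Local Open Scope ring_scope.

Definition dotv (R : realType) (d : nat) (u v : 'cV[R]_d) : R :=
  \sum_(i < d) u i 0 * v i 0.
Definition enorm (R : realType) (d : nat) (w : 'cV[R]_d) : R :=
  Num.sqrt (dotv w w).

Definition loewner_ge (R : realType) (d : nat) (A B : 'M[R]_d) : Prop :=
  forall v : 'cV[R]_d, 0 <= (v^T *m (A - B) *m v) 0 0.

(* The distribution P of (x, y) on X x {-1,+1} is given by:
   - a probability space (T, mu) and a feature map xf : T -> R^d (the law of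
     x is the pushforward of mu by xf), and
   - the conditional probability eta x = Pr(y = 1 | x)
     (so Pr(y = -1 | x) = 1 - eta x). *)
Definition Ejoint (R : realType) (dT : measure_display) (T : measurableType dT)
  (mu : probability T R) (d : nat) (xf : T -> 'cV[R]_d) (eta : 'cV[R]_d -> R)
  (f : 'cV[R]_d -> R -> R) : R :=
  \int[mu]_(t in setT)
     (eta (xf t) * f (xf t) 1 + (1 - eta (xf t)) * f (xf t) (-1)).

Definition Emx (R : realType) (dT : measure_display) (T : measurableType dT)
  (mu : probability T R) (d : nat) (xf : T -> 'cV[R]_d) (eta : 'cV[R]_d -> R)
  (F : 'cV[R]_d -> R -> 'M[R]_d) : 'M[R]_d :=
  \matrix_(i, j) Ejoint mu xf eta (fun x y => F x y i j).

Definition grad_cov (R : realType) (dT : measure_display) (T : measurableType dT)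
  (mu : probability T R) (d : nat) (xf : T -> 'cV[R]_d) (eta : 'cV[R]_d -> R)
  (l : R -> R) (w : 'cV[R]_d) : 'M[R]_d :=
  Emx mu xf eta (fun x y => ((derive1 l (y * dotv w x)) ^+ 2) *: (x *m x^T)).

Definition second_moment (R : realType) (dT : measure_display) (T : measurableType dT)
  (mu : probability T R) (d : nat) (xf : T -> 'cV[R]_d) (eta : 'cV[R]_d -> R)
  : 'M[R]_d :=
  Emx mu xf eta (fun x _ => x *m x^T).

Definition risk (R : realType) (dT : measure_display) (T : measurableType dT)
  (mu : probability T R) (d : nat) (xf : T -> 'cV[R]_d) (eta : 'cV[R]_d -> R)
  (l : R -> R) (w : 'cV[R]_d) : R :=
  Ejoint mu xf eta (fun x y => l (y * dotv w x)).

Definition assumption_I (R : realType) (dT : measure_display) (T : measurableType dT)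
  (mu : probability T R) (d : nat) (xf : T -> 'cV[R]_d) (eta : 'cV[R]_d -> R)
  (l : R -> R) (wstar : 'cV[R]_d) (theta : R) : Prop :=
  0 < theta /\
  loewner_ge (grad_cov mu xf eta l wstar) (theta *: second_moment mu xf eta).

Definition assumption_II (R : realType) (dT : measure_display) (T : measurableType dT)
  (mu : probability T R) (d : nat) (xf : T -> 'cV[R]_d) (eta : 'cV[R]_d -> R)
  (l : R -> R) (W : set 'cV[R]_d) (theta : R) : Prop :=
  0 < theta /\
  forall w, W w ->
    loewner_ge (grad_cov mu xf eta l w) (theta *: second_moment mu xf eta).

(* Main.v *)
Require Import Defs.
From HB Require Import structures.
From mathcomp Require Import all_boot all_order all_algebra.
From mathcomp Require Import all_classical all_reals all_analysis.
From mathcomp Require Import ring lra.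
From mathcomp Require Import measurable_realfun.
Import Order.TTheory GRing.Theory Num.Theory.
Import numFieldNormedType.Exports.
Local Open Scope classical_set_scope.
Local Open Scope ring_scope.

Section integ.
Context {R : realType} {dT : measure_display} {T : measurableType dT}
  (mu : probability T R).

Lemma bnd01 (h : T -> R) : (forall t, 0 <= h t <= 1) -> [bounded h t | t in setT].
Proof.
move=> h01; exists 1; split => // M M1 x _ /=.
have /andP[h0 h1] := h01 x.
by rewrite ger0_norm // (le_trans h1) // ltW.
Qed.

Lemma intZ (c : R) (f : T -> R) : mu.-integrable setT (EFin \o f) ->
  mu.-integrable setT (EFin \o (fun t => c * f t)).
Proof.
move=> H.
have -> : EFin \o (fun t => c * f t) = (fun t => (c%:E * (EFin \o f) t)%E).
  by apply/funext => t; rewrite /= EFinM.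
exact: integrableZl.
Qed.

Lemma intD (f g : T -> R) : mu.-integrable setT (EFin \o f) ->
  mu.-integrable setT (EFin \o g) ->
  mu.-integrable setT (EFin \o (fun t => f t + g t)).
Proof.
move=> Hf Hg.
have -> : EFin \o (fun t => f t + g t) = ((EFin \o f) \+ (EFin \o g))%E.
  by apply/funext => t; rewrite /= EFinD.
exact: integrableD.
Qed.

Lemma intB (f g : T -> R) : mu.-integrable setT (EFin \o f) ->
  mu.-integrable setT (EFin \o g) ->
  mu.-integrable setT (EFin \o (fun t => f t - g t)).
Proof.
move=> Hf Hg; apply: intD => //.
have -> : (fun t => - g t) = (fun t => -1 * g t).
  by apply/funext => t; rewrite mulN1r.
exact: intZ.
Qed.

Lemma intM (h f : T -> R) : measurable_fun setT h -> (forall t, 0 <= h t <= 1) ->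
  mu.-integrable setT (EFin \o f) ->
  mu.-integrable setT (EFin \o (fun t => h t * f t)).
Proof.
move=> mh h01 Hf.
have -> : EFin \o (fun t => h t * f t) = ((EFin \o h) \* (EFin \o f))%E.
  by apply/funext => t; rewrite /= EFinM.
apply: integrableMr => //; exact: bnd01.
Qed.

Lemma Rint_sum (I : Type) (s : seq I) (F : I -> T -> R) :
  (forall i, mu.-integrable setT (EFin \o F i)) ->
  mu.-integrable setT (EFin \o (fun t => \sum_(i <- s) F i t)) /\
  \int[mu]_(t in setT) (\sum_(i <- s) F i t) = \sum_(i <- s) \int[mu]_(t in setT) F i t.
Proof.
move=> HF; elim: s => [|i s [IH1 IH2]].
  have E : (fun t => \sum_(i <- [::]) F i t) = (fun t => 0).
    by apply/funext => t; rewrite big_nil.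
  rewrite E big_nil; split.
    have -> : EFin \o (fun _ : T => (0:R)) = cst 0%E by [].
    exact: integrable0.
  by rewrite Rintegral_cst // mul0r.
have E : (fun t => \sum_(j <- i :: s) F j t) = (fun t => F i t + \sum_(j <- s) F j t).
  by apply/funext => t; rewrite big_cons.
rewrite E big_cons; split; first exact: intD.
by rewrite RintegralD // IH2.
Qed.

End integ.
Section cvx.
Context {R : realType}.
Variable f : R -> R.
Hypothesis cvx : convex_function (E := R^o) setT f.

Lemma cvx_slope x y h : y != x -> 0 <= h / (y - x) <= 1 ->
  f (x + h) - f x <= h / (y - x) * (f y - f x).
Proof.
move=> yx /andP[t0 t1].
have H := cvx (Itv01 t0 t1) (y : R^o) (x : R^o) (in_setT _) (in_setT _).
rewrite convRE /= in H.
have E : conv (Itv01 t0 t1) (y : convex_lmodType R^o) (x : convex_lmodType R^o) = x + h :> R.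
  change ((h/(y-x)) * y + unstable.onem (h/(y-x)) * x = x + h).
  have yx' : y - x != 0 by rewrite subr_eq0.
  rewrite /unstable.onem; field. exact yx'.
rewrite E in H.
rewrite lerBlDl; apply: (le_trans H).
rewrite /unstable.onem.
have -> : h / (y - x) * f y + (1 - h / (y - x)) * f x = f x + h / (y - x) * (f y - f x) by ring.
by [].
Qed.

Lemma cvx_tangent x y : derivable f x 1 -> f x + derive1 f x * (y - x) <= f y.
Proof.
move=> df.
have [yx|yx|->] := ltgtP y x; last by rewrite subrr mulr0 addr0.
- have yx0 : y - x < 0 by rewrite subr_lt0.
  have yx' : y != x by rewrite lt_eqF.
  suff : (f y - f x) / (y - x) <= derive1 f x.
    rewrite ler_ndivrMr // => H.
    by rewrite -(lerD2l (f x)) [f x + (f y - f x)]addrC subrK in H.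
  rewrite derive1E ['D_1 f x]cvg_at_leftE; last exact: df.
  apply: limr_ge.
    rewrite -(cvg_at_leftE (fun h => h^-1 *: ((f \o shift x) _ - f x))) //.
    apply: cvg_trans df; apply: cvg_app.
    move=> A [e egt0 Ae]; exists e => // z ze zlt0; apply: Ae => //.
    exact/ltr0_neq0.
  near=> h.
  have [hb hlt0] : y - x < h /\ h < 0.
    near: h; exists (x - y); first by rewrite /= subr_gt0.
    move=> h /= /ltr_normlP [_ hb] hlt0; split => //.
    by rewrite sub0r ltrNl opprB in hb.
  have ht : 0 <= h / (y - x) <= 1.
    apply/andP; split; first by apply: mulr_le0; rewrite ?invr_le0 ltW.
    by rewrite ler_ndivrMr // mul1r ltW.
  have hD := @cvx_slope x y h yx' ht.
  rewrite /= [h%:A]mulr1 [h + x]addrC.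
  have hi : h^-1 <= 0 by rewrite invr_le0 ltW.
  apply: le_trans (ler_wnM2l hi hD).
  have h0 : h != 0 by rewrite lt_eqF.
  have yx1 : y - x != 0 by rewrite subr_eq0.
  rewrite le_eqVlt; apply/orP; left; apply/eqP; field.
  by apply/andP; split.
- have yx0 : 0 < y - x by rewrite subr_gt0.
  have yx' : y != x by rewrite gt_eqF.
  suff : derive1 f x <= (f y - f x) / (y - x).
    rewrite ler_pdivlMr // => H.
    by rewrite -(lerD2l (f x)) [f x + (f y - f x)]addrC subrK in H.
  rewrite derive1E ['D_1 f x]cvg_at_rightE; last exact: df.
  apply: limr_le.
    rewrite -(cvg_at_rightE (fun h => h^-1 *: ((f \o shift x) _ - f x))) //.
    apply: cvg_trans df; apply: cvg_app.
    move=> A [e egt0 Ae]; exists e => // z ze zlt0; apply: Ae => //.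
    exact/lt0r_neq0.
  near=> h.
  have [hb hgt0] : h < y - x /\ 0 < h.
    near: h; exists (y - x); first by [].
    move=> h /= /ltr_normlP [hb _] hgt0; split => //.
    by rewrite sub0r opprK in hb.
  have ht : 0 <= h / (y - x) <= 1.
    apply/andP; split; first by apply: divr_ge0; apply: ltW.
    by rewrite ler_pdivrMr // mul1r ltW.
  have hD := @cvx_slope x y h yx' ht.
  rewrite /= [h%:A]mulr1 [h + x]addrC.
  have hi : 0 <= h^-1 by rewrite invr_ge0 ltW.
  apply: le_trans (ler_wpM2l hi hD) _.
  have h0 : h != 0 by rewrite gt_eqF.
  have yx1 : y - x != 0 by rewrite subr_eq0.
  rewrite le_eqVlt; apply/orP; left; apply/eqP; field.
  by apply/andP; split.
Unshelve. all: by end_near.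
Qed.
End cvx.

Lemma cvx_mono {R : realType} (f : R -> R) a :
  convex_function (E := R^o) setT f -> (forall z, derivable f z 1) ->
  0 <= a -> derive1 f 0 <= derive1 f a.
Proof.
move=> cvx df; rewrite le_eqVlt => /predU1P [<-|a0] //.
have h1 := cvx_tangent f cvx 0 a (df 0).
have h2 := cvx_tangent f cvx a 0 (df a).
rewrite subr0 in h1; rewrite sub0r in h2.
nra.
Qed.

Lemma key_pt {R : realType} (l : R -> R) (q e b : R) :
  convex_function (E := R^o) setT l -> (forall z, derivable l z 1) ->
  0 < derive1 l 0 -> 0 <= q -> q <= e -> q <= 1 - e ->
  q * (derive1 l 0) ^+ 2 <=
  e * (derive1 l (1 * b)) ^+ 2 + (1 - e) * (derive1 l (-1 * b)) ^+ 2.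
Proof.
move=> cvx df d0 q0 qe qe'.
rewrite mul1r mulN1r.
have e0 : 0 <= e by apply: le_trans qe.
have e1 : 0 <= 1 - e by apply: le_trans qe'.
have [b0|b0] := leP 0 b.
  have hm := cvx_mono l b cvx df b0.
  have h1 : derive1 l 0 ^+ 2 <= derive1 l b ^+ 2 by nra.
  rewrite -[X in X <= _]addr0; apply: lerD; last by apply: mulr_ge0; rewrite ?sqr_ge0.
  by apply: ler_pM => //; rewrite sqr_ge0.
have hb : 0 <= - b by rewrite oppr_ge0 ltW.
have hm := cvx_mono l (- b) cvx df hb.
have h1 : derive1 l 0 ^+ 2 <= derive1 l (- b) ^+ 2 by nra.
rewrite -[X in X <= _]add0r; apply: lerD; first by apply: mulr_ge0; rewrite ?sqr_ge0.
by apply: ler_pM => //; rewrite sqr_ge0.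
Qed.

Lemma qfE {R : realType} (d : nat) (A : 'M[R]_d) (v : 'cV[R]_d) :
  (v^T *m A *m v) 0 0 = \sum_(j < d) \sum_(i < d) (v i 0 * A i j * v j 0).
Proof.
rewrite mxE; apply: eq_bigr => j _; rewrite mxE mulr_suml; apply: eq_bigr => i _.
by rewrite mxE.
Qed.

Theorem lemma1 (R : realType) (dT : measure_display) (T : measurableType dT)
  (mu : probability T R) (d : nat) (X : set 'cV[R]_d)
  (xf : T -> 'cV[R]_d) (eta : 'cV[R]_d -> R)
  (Rad : R) (l : R -> R) (wstar : 'cV[R]_d) (q : R) :
  (* the distribution P on X x {-1,+1} *)
  (forall t, X (xf t)) ->
  (forall i : 'I_d, measurable_fun setT (fun t => xf t i 0)) ->
  measurable_fun setT (fun t => eta (xf t)) ->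
  (forall x, 0 <= eta x <= 1) ->
  (* the expectations in Assumptions (I)/(II) exist (finite) *)
  (forall i j : 'I_d,
     mu.-integrable setT (fun t => (xf t i 0 * xf t j 0)%:E)) ->
  (forall w : 'cV[R]_d, enorm w <= Rad -> forall (s : R), (s = 1 \/ s = -1) ->
     forall i j : 'I_d,
     mu.-integrable setT
       (fun t => ((derive1 l (s * dotv w (xf t))) ^+ 2 * (xf t i 0 * xf t j 0))%:E)) ->
  (* R > 0, W = closed ball of radius R *)
  0 < Rad ->
  (* l : R -> R_+ convex, differentiable *)
  (forall z, 0 <= l z) ->
  convex_function (E := R^o) setT l ->
  (forall z : R, derivable l z 1) ->
  (* w_* minimizes the risk over W *)
  enorm wstar <= Rad ->
  (forall w, enorm w <= Rad -> risk mu xf eta l wstar <= risk mu xf eta l w) ->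
  (* (i) *)
  0 < q ->
  (forall x, X x -> q <= eta x /\ q <= 1 - eta x) ->
  (* (ii) *)
  0 < derive1 l 0 ->
  exists theta : R,
    q * (derive1 l 0) ^+ 2 <= theta /\
    assumption_I mu xf eta l wstar theta /\
    assumption_II mu xf eta l [set w | enorm w <= Rad] theta.
Proof.
move=> HX Hxm Hem He01 Hint Hintg Rpos l0 cvx dl Hws Hmin q0 Hq dl0.
have th0 : 0 < q * derive1 l 0 ^+ 2 by rewrite mulr_gt0 // exprn_gt0.
suff main : forall w, enorm w <= Rad -> loewner_ge (grad_cov mu xf eta l w)
    ((q * derive1 l 0 ^+ 2) *: second_moment mu xf eta).
  exists (q * derive1 l 0 ^+ 2); split => //; split; split => //.
  exact: main.
move=> w Hw v.
pose e t := eta (xf t).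
pose g i j t := e t * (derive1 l (1 * dotv w (xf t)) ^+ 2 * (xf t i 0 * xf t j 0))
  + (1 - e t) * (derive1 l (-1 * dotv w (xf t)) ^+ 2 * (xf t i 0 * xf t j 0)).
pose m (i j : 'I_d) t := xf t i 0 * xf t j 0.
pose th := q * derive1 l 0 ^+ 2.
pose K (i j : 'I_d) t := v i 0 * v j 0 * (g i j t - th * m i j t).
have me1 : measurable_fun setT (fun t => 1 - e t).
  by apply: measurable_funB => //; exact: measurable_cst.
have e01 t : 0 <= e t <= 1 by exact: He01.
have e01' t : 0 <= 1 - e t <= 1.
  have /andP[a b] := e01 t; apply/andP; split; lra.
have Im i j : mu.-integrable setT (EFin \o m i j) by exact: Hint.
have Ig i j : mu.-integrable setT (EFin \o g i j).
  apply: intD; apply: intM => //.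
    exact: (Hintg w Hw 1 (or_introl erefl)).
  exact: (Hintg w Hw (-1) (or_intror erefl)).
have Igm i j : mu.-integrable setT (EFin \o (fun t => g i j t - th * m i j t)).
  by apply: intB => //; apply: intZ.
have IK i j : mu.-integrable setT (EFin \o K i j) by apply: intZ.
have EG i j : grad_cov mu xf eta l w i j = \int[mu]_(t in setT) g i j t.
  rewrite /grad_cov /Emx mxE /Ejoint; apply: eq_Rintegral => t _.
  by rewrite !mxE !big_ord1 !mxE.
have EM i j : second_moment mu xf eta i j = \int[mu]_(t in setT) m i j t.
  rewrite /second_moment /Emx mxE /Ejoint; apply: eq_Rintegral => t _.
  rewrite !mxE !big_ord1 !mxE /m; ring.
have E2 i j : v i 0 * (grad_cov mu xf eta l w - th *: second_moment mu xf eta) i j * v j 0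
    = \int[mu]_(t in setT) K i j t.
  have Esub : (grad_cov mu xf eta l w - th *: second_moment mu xf eta) i j =
    grad_cov mu xf eta l w i j - th * second_moment mu xf eta i j by rewrite !mxE.
  rewrite Esub EG EM /K.
  rewrite (RintegralZl (f := fun t => g i j t - th * m i j t)) //.
  rewrite (RintegralB (f1 := g i j) (f2 := fun t => th * m i j t)) //; last exact: intZ.
  rewrite (RintegralZl (f := m i j)) //.
  ring.
rewrite qfE.
rewrite (eq_bigr (fun j => \int[mu]_(t in setT) \sum_(i < d) K i j t)); last first.
  move=> j _; rewrite (eq_bigr (fun i => \int[mu]_(t in setT) K i j t)); last first.
    by move=> i _; rewrite E2.
  exact: esym (Rint_sum mu _ (index_enum 'I_d) (fun i => K i j) (fun i => IK i j)).2.
rewrite -(Rint_sum mu _ (index_enum 'I_d) (fun j t => \sum_(i < d) K i j t)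
   (fun j => (Rint_sum mu _ (index_enum 'I_d) (fun i => K i j) (fun i => IK i j)).1)).2.
apply: Rintegral_ge0 => t _.
pose c := e t * derive1 l (1 * dotv w (xf t)) ^+ 2
  + (1 - e t) * derive1 l (-1 * dotv w (xf t)) ^+ 2 - th.
pose u (i : 'I_d) := v i 0 * xf t i 0.
have c0 : 0 <= c.
  have [qa qb] := Hq _ (HX t).
  rewrite /c subr_ge0; exact: (key_pt l q (e t) (dotv w (xf t)) cvx dl dl0 (ltW q0) qa qb).
have EK i j : K i j t = c * u i * u j by rewrite /K /g /m /c /u; ring.
rewrite (eq_bigr (fun j => (\sum_(i < d) c * u i) * u j)); last first.
  by move=> j _; rewrite mulr_suml; apply: eq_bigr => i _; rewrite EK.
rewrite -mulr_sumr -mulr_sumr -mulrA; apply: mulr_ge0 => //.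
by rewrite -expr2 sqr_ge0.
Qed.
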